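(* Let $X$ be a finite set with the discrete uniformity $\mathcal U$. Then the free non-archimedean precompact group $F^{Prec}_{NA}(X,\mathcal U)$ is algebraically the free group $F(X)$ over $X$ (i.e. the universal map $i$ is injective and $i(X)$ freely generates it).
   Context: All groups are Hausdorff. A topological group is non-archimedean if it has a local base at the identity of open subgroups. $F^{Prec}_{NA}(X,\mathcal U)$ is the precompact non-archimedean topological group with a uniformly continuous map $i\colon X\to F^{Prec}_{NA}$ such that every uniformly continuous map from $X$ into a precompact non-archimedean group factors uniquely as a continuous homomorphism composed with $i$. *)

(* Defs.v *)
From mathcomp Require Import all_boot.
From mathcomp Require Import boolp classical_sets cardinality topology.
Set Implicit Arguments. Unset Strict Implicit. Unset Printing Implicit Defensive.
Local Open Scope classical_set_scope.

Record grp (G : Type) := Grp {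
  gmul : G -> G -> G;
  ginv : G -> G;
  gone : G;
  gmulA : forall x y z, gmul x (gmul y z) = gmul (gmul x y) z;
  gmul1 : forall x, gmul gone x = x;
  gmulV : forall x, gmul (ginv x) x = gone
}.

Definition is_hom (G H : Type) (gG : grp G) (gH : grp H) (f : G -> H) :=
  forall x y, f (gmul gG x y) = gmul gH (f x) (f y).

Definition subgroup (G : Type) (gG : grp G) (A : set G) :=
  A (gone gG) /\ (forall x y, A x -> A y -> A (gmul gG x y)) /\
  (forall x, A x -> A (ginv gG x)).

Record topgrp (T : topologicalType) := TopGrp {
  tg_grp :> grp T;
  tg_mul_cont : continuous (fun p : T * T => gmul tg_grp p.1 p.2);
  tg_inv_cont : continuous (ginv tg_grp);
  tg_hausdorff : hausdorff_space T
}.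

Definition non_archimedean (T : topologicalType) (gT : topgrp T) :=
  forall U : set T, nbhs (gone gT) U ->
    exists H : set T, subgroup gT H /\ open H /\ H `<=` U.

Definition precompact (T : topologicalType) (gT : topgrp T) :=
  forall U : set T, nbhs (gone gT) U ->
    exists F : set T, finite_set F /\
      forall g, exists2 a, F a & U (gmul gT (ginv gT a) g).

Definition discrete_entourage (X : Type) (E : set (X * X)) :=
  forall x, E (x, x).

(* uniform continuity of f : (X, discrete uniformity) -> G, G with its
   (left) group uniformity *)
Definition unif_cont_discrete (X : Type) (T : topologicalType) (gT : topgrp T)
  (f : X -> T) :=
  forall U : set T, nbhs (gone gT) U ->
    exists E : set (X * X), discrete_entourage E /\
      forall x y, E (x, y) -> U (gmul gT (ginv gT (f x)) (f y)).

Definition is_free_prec_NA (X : Type) (G : topologicalType) (gG : topgrp G)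
  (i : X -> G) :=
  precompact gG /\ non_archimedean gG /\ unif_cont_discrete gG i /\
  forall (H : topologicalType) (gH : topgrp H),
    precompact gH -> non_archimedean gH ->
    forall f : X -> H, unif_cont_discrete gH f ->
      exists! phi : G -> H, [/\ continuous phi, is_hom gG gH phi &
                                forall x, phi (i x) = f x].

Definition algebraically_free (X : Type) (G : Type) (gG : grp G) (i : X -> G) :=
  injective i /\
  forall (K : Type) (gK : grp K) (f : X -> K),
    exists! phi : G -> K, is_hom gG gK phi /\ forall x, phi (i x) = f x.

(* Main.v *)
Require Import Defs.
From mathcomp Require Import all_boot.
From mathcomp Require Import boolp classical_sets cardinality topology.
From mathcomp Require Import functions fingroup perm zify.
Set Implicit Arguments. Unset Strict Implicit. Unset Printing Implicit Defensive.

Module RFM.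
Import GroupScope.
Section Ext.
Variable T : finType.
Variable p : T -> option T.
Hypothesis pinj : forall a a' b, p a = Some b -> p a' = Some b -> a = a'.

Let D := [set a | p a != None].
Let pf a := odflt a (p a).
Let R := pf @: D.
Let s1 := enum (~: D).
Let s2 := enum (~: R).
Definition hext a := if p a is Some b then b else nth a s2 (index a s1).

Lemma size_s12 : size s1 = size s2.
Proof.
have HC (A : {set T}) : #|~: A| = #|T| - #|A| by rewrite -(cardsC A) addKn.
rewrite /s1 /s2 -(cardE (~: D)) -(cardE (~: R)) !HC; congr (_ - _).
rewrite card_in_imset // => a a'; rewrite !inE /pf.
case Ea: (p a) => [b|] //; case Ea': (p a') => [b'|] //= _ _ Ebb.
by subst; apply: pinj Ea Ea'.
Qed.

Lemma hext_none a : p a = None -> hext a \in s2.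
Proof.
move=> Ea; rewrite /hext Ea; apply: mem_nth; rewrite -size_s12 index_mem.
by rewrite /s1 mem_enum !inE Ea.
Qed.

Lemma hext_inj : injective hext.
Proof.
have Hnr : forall a b, p a = Some b -> b \notin s2.
  move=> a b Ea; rewrite /s2 mem_enum !inE negbK.
  apply/imsetP; exists a; first by rewrite inE Ea.
  by rewrite /pf Ea.
move=> a a'; case Ea: (p a) => [b|]; case Ea': (p a') => [b'|].
- rewrite /hext Ea Ea' => Ebb; subst; exact: pinj Ea Ea'.
- move=> E; have := hext_none Ea'; rewrite -E /hext Ea.
  by rewrite (negbTE (Hnr _ _ Ea)).
- move=> E; have := hext_none Ea; rewrite E /hext Ea'.
  by rewrite (negbTE (Hnr _ _ Ea')).
- have ia : a \in s1 by rewrite /s1 mem_enum !inE Ea.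
  have ia' : a' \in s1 by rewrite /s1 mem_enum !inE Ea'.
  rewrite /hext Ea Ea'.
  have l1 : index a s1 < size s2 by rewrite -size_s12 index_mem.
  have l2 : index a' s1 < size s2 by rewrite -size_s12 index_mem.
  rewrite (set_nth_default a' a l1) => /eqP.
  rewrite nth_uniq ?enum_uniq // => /eqP.
  exact: index_inj.
Qed.

Lemma ext_perm : exists s : {perm T}, forall a b, p a = Some b -> s a = b.
Proof.
exists (perm hext_inj) => a b Ea; by rewrite permE /hext Ea.
Qed.
End Ext.
Section RF.
Variable X : finType.
Definition canc (l1 l2 : X * bool) := (l1.1 == l2.1) && (l1.2 != l2.2).
Definition reduced (w : seq (X * bool)) := sorted (fun a b => ~~ canc a b) w.
Definition ltrP (gT : finGroupType) (g : X -> gT) (l : X * bool) :=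
  if l.2 then g l.1 else (g l.1)^-1.
Definition evwP (gT : finGroupType) (g : X -> gT) w :=
  foldr (fun l acc => ltrP g l * acc) 1 w.

Lemma reducedP w d k : reduced w -> k.+1 < size w ->
  ~~ canc (nth d w k) (nth d w k.+1).
Proof.
case: w => [|x p] //= /pathP H lt; exact: H.
Qed.

Variable w : seq (X * bool).
Hypothesis wred : reduced w.
Variable d : X * bool.
Let n := size w.

Definition px (x : X) (a : 'I_n.+1) : option 'I_n.+1 :=
  if (a < n) && (nth d w a == (x,true)) then Some (inord a.+1)
  else if (0 < a) && (nth d w a.-1 == (x,false)) then Some (inord a.-1)
  else None.

Lemma pxP x a b : px x a = Some b ->
  (a < n /\ nth d w a = (x,true) /\ nat_of_ord b = a.+1) \/
  (0 < a /\ nth d w a.-1 = (x,false) /\ nat_of_ord b = a.-1).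
Proof.
have va := ltn_ord a.
rewrite /px; case: ifP => [/andP[l1 /eqP e1]|_].
  by move=> [<-]; left; rewrite inordK; try lia.
case: ifP => [/andP[l1 /eqP e1]|_] //.
by move=> [<-]; right; rewrite inordK; try lia.
Qed.

Lemma px_inj x a a' b : px x a = Some b -> px x a' = Some b -> a = a'.
Proof.
have cc : forall k, k.+1 < n -> nth d w k = (x,true) -> nth d w k.+1 = (x,false) -> False.
  move=> k kn E1 E2; have := reducedP d wred kn; rewrite E1 E2 /canc /= eqxx //.
have cc' : forall k, k.+1 < n -> nth d w k = (x,false) -> nth d w k.+1 = (x,true) -> False.
  move=> k kn E1 E2; have := reducedP d wred kn; rewrite E1 E2 /canc /= eqxx //.
have va := ltn_ord a; have va' := ltn_ord a'.
move=> /pxP [[l1 [e1 b1]]|[l1 [e1 b1]]] /pxP [[l2 [e2 b2]]|[l2 [e2 b2]]];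
  try (apply/val_inj => /=; lia).
- exfalso; apply: (cc a); first lia. by []. have -> : a.+1 = a'.-1 by lia. by [].
- exfalso; apply: (cc a'); first lia. by []. have -> : a'.+1 = a.-1 by lia. by [].
Qed.

Definition gx (x : X) : {perm 'I_n.+1} :=
  odflt 1 [pick s : {perm 'I_n.+1} | [forall a, forall b, (px x a == Some b) ==> (s a == b)]].

Lemma gxP x a b : px x a = Some b -> gx x a = b.
Proof.
have [s Hs] := ext_perm (@px_inj x).
rewrite /gx; case: pickP => [s' /forallP H /= E|].
  by have /forallP/(_ b)/implyP/(_ (introT eqP E))/eqP := H a.
move=> /(_ s) /negP; case; apply/forallP => a'; apply/forallP => b'.
by apply/implyP => /eqP /Hs ->.
Qed.

Lemma step k : k < n -> (ltrP gx (nth d w k)) (inord k) = inord k.+1.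
Proof.
move=> kn; rewrite /ltrP; case E: (nth d w k) => [x []] /=.
  apply: gxP; rewrite /px inordK; last lia.
  by rewrite kn E eqxx.
apply: (canLR (permK (gx x))); symmetry; apply: gxP.
rewrite /px inordK; last lia.
case: ifP => [/andP[l /eqP e]|_].
  by exfalso; have := reducedP d wred l; rewrite E e /canc /= eqxx.
by rewrite /= E eqxx.
Qed.

Lemma evw_drop m : forall k, k + m = n ->
  (evwP gx (drop k w)) (inord k) = inord n.
Proof.
elim: m => [|m IH] k km.
  rewrite addn0 in km; subst k; rewrite drop_size /= perm1 //.
rewrite (drop_nth d); last lia.
rewrite /= permM step; last lia.
apply: IH; lia.
Qed.

Lemma evw_ne1 : 0 < n -> evwP gx w != 1.
Proof.
move=> n0; apply/eqP => E; have := evw_drop (m := n) (k := 0) erefl.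
rewrite drop0 E perm1 => /(congr1 (@nat_of_ord _)); rewrite !inordK //; lia.
Qed.
End RF.

Lemma RF (X : finType) (w : seq (X * bool)) : reduced w -> w != [::] ->
  exists g : X -> {perm 'I_(size w).+1}, evwP g w != 1.
Proof.
case: w => [|l w] // wr _; exists (@gx _ (l :: w) l); exact: evw_ne1.
Qed.
Section PT.
Local Open Scope classical_set_scope.
Variable T : finGroupType.
Let P := discrete_topology T.

Lemma Pmul_cont : continuous (fun p : P * P => (mulg p.1 p.2 : P)).
Proof.
move=> [a b]; apply/discrete_cvg.
rewrite /nbhs /=; exists ([set a], [set b]); first by split; apply: discrete_set1.
by move=> [x y] [/= -> ->].
Qed.

Lemma Pinv_cont : continuous (fun p : P => (invg p : P)).
Proof.
move=> a U /nbhs_singleton Ua; rewrite /= nbhs_principalE.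
exact/principal_filterP.
Qed.
End PT.
End RFM.
Import RFM.

Local Open Scope classical_set_scope.
Section GrpLemmas.
Variables (G : Type) (g : grp G).
Local Notation m := (gmul g).
Local Notation iv := (ginv g).
Local Notation e := (gone g).

Lemma gmulVr x : m x (iv x) = e.
Proof.
have H : m (iv (iv x)) (iv x) = e by apply: (gmulV g).
rewrite -[LHS](gmul1 g) -{1}H -(gmulA g) (gmulA g (iv x)) (gmulV g) (gmul1 g).
exact: H.
Qed.

Lemma gmul1r x : m x e = x.
Proof. by rewrite -(gmulV g x) gmulA gmulVr gmul1. Qed.

Lemma gcancel a b c : m a b = m a c -> b = c.
Proof.
move=> E; rewrite -(gmul1 g b) -(gmul1 g c) -(gmulV g a) -!(gmulA g) E //.
Qed.

Lemma ginv_uniq a b : m a b = e -> a = iv b.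
Proof.
move=> E; rewrite -[a]gmul1r -(gmulVr b) (gmulA g) E (gmul1 g) //.
Qed.

Lemma ginvK a : iv (iv a) = a.
Proof. by symmetry; apply: ginv_uniq; apply: gmulVr. Qed.

Lemma ginvM a b : iv (m a b) = m (iv b) (iv a).
Proof.
symmetry; apply: ginv_uniq.
by rewrite -(gmulA g) (gmulA g (iv a)) (gmulV g) (gmul1 g) (gmulV g).
Qed.

Lemma ginv1 : iv e = e.
Proof. by symmetry; apply: ginv_uniq; rewrite gmul1. Qed.
End GrpLemmas.

Section Hom.
Variables (G H : Type) (gG : grp G) (gH : grp H) (phi : G -> H).
Hypothesis hp : is_hom gG gH phi.
Lemma hom1 : phi (gone gG) = gone gH.
Proof.
apply: (@gcancel _ gH (phi (gone gG))).
by rewrite -hp gmul1 gmul1r.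
Qed.
Lemma homV x : phi (ginv gG x) = ginv gH (phi x).
Proof. by apply: ginv_uniq; rewrite -hp gmulV hom1. Qed.
End Hom.

Section Words.
Variables (X : Type) (G : Type) (g : grp G) (f : X -> G).
Definition ltr (l : X * bool) := if l.2 then f l.1 else ginv g (f l.1).
Definition evw (w : seq (X * bool)) :=
  foldr (fun l acc => gmul g (ltr l) acc) (gone g) w.
Definition flipl (l : X * bool) := (l.1, ~~ l.2).
Definition winv (w : seq (X * bool)) := rev (map flipl w).

Lemma evw_cat u v : evw (u ++ v) = gmul g (evw u) (evw v).
Proof.
elim: u => [|l u IH] /=; first by rewrite gmul1.
by rewrite IH gmulA.
Qed.

Lemma ltr_flip l : ltr (flipl l) = ginv g (ltr l).
Proof. by case: l => x []; rewrite /ltr /= ?ginvK. Qed.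

Lemma evw_winv w : evw (winv w) = ginv g (evw w).
Proof.
elim: w => [|l w IH]; first by rewrite /= ginv1.
rewrite /winv /= rev_cons -cats1 evw_cat -/(winv w) IH /= gmul1r ltr_flip.
by rewrite ginvM.
Qed.
End Words.

Lemma hom_evw (X G H : Type) (gG : grp G) (gH : grp H) (phi : G -> H)
  (f : X -> G) w : is_hom gG gH phi ->
  phi (evw gG f w) = evw gH (phi \o f) w.
Proof.
move=> hp; elim: w => [|[x b] w IH] /=; first exact: hom1.
rewrite hp IH /ltr /=; case: b => //=; by rewrite (homV hp).
Qed.

Lemma evw_ext (X G : Type) (g : grp G) (f f' : X -> G) w :
  (forall x, f x = f' x) -> evw g f w = evw g f' w.
Proof. by move=> E; elim: w => [|[x b] w IH] //=; rewrite IH /ltr /= E. Qed.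
Section SubTG.
Variables (G : topologicalType) (gG : topgrp G) (S : set G).
Hypothesis HS : subgroup gG S.
Let ST := set_type S.

Definition smul (a b : ST) : ST :=
  SigSub (mem_set (HS.2.1 _ _ (set_valP a) (set_valP b))).
Definition sinv (a : ST) : ST := SigSub (mem_set (HS.2.2 _ (set_valP a))).
Definition sone : ST := SigSub (mem_set HS.1).

Lemma smulA x y z : smul x (smul y z) = smul (smul x y) z.
Proof. apply: val_inj => /=; exact: gmulA. Qed.
Lemma smul1 x : smul sone x = x.
Proof. apply: val_inj => /=; exact: gmul1. Qed.
Lemma smulV x : smul (sinv x) x = sone.
Proof. apply: val_inj => /=; exact: gmulV. Qed.

Definition sgrp : grp ST := Grp smulA smul1 smulV.

Lemma val_cont : continuous (set_val : ST -> G).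
Proof. exact: initial_continuous. Qed.

Lemma smul_cont : continuous (fun p : ST * ST => smul p.1 p.2).
Proof.
apply: (@continuous_comp_initial _ _ _ (set_val : ST -> G)).
move=> [a b].
have -> : (set_val \o (fun p : ST * ST => smul p.1 p.2)) =
  (fun p : G * G => gmul gG p.1 p.2) \o (fun p : ST * ST => (set_val p.1, set_val p.2)).
  by apply: funext => -[x y].
apply: continuous_comp; last exact: tg_mul_cont.
move=> W /= [[U V]] /= [Ua Vb] UVW.
exists (set_val @^-1` U, set_val @^-1` V).
  by split; apply: val_cont.
by move=> [x y] /= [Ux Vy]; apply: UVW.
Qed.

Lemma sinv_cont : continuous sinv.
Proof.
apply: (@continuous_comp_initial _ _ _ (set_val : ST -> G)).
move=> a.
have -> : (set_val \o sinv) = ginv gG \o (set_val : ST -> G) by apply: funext.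
apply: continuous_comp; first exact: val_cont.
exact: tg_inv_cont.
Qed.

Lemma shaus : hausdorff_space ST.
Proof.
move=> p q cl; apply: val_inj; apply: (tg_hausdorff gG) => U V Up Vq.
have [z [Uz Vz]] := cl _ _ (val_cont Up) (val_cont Vq).
by exists (set_val z).
Qed.

Definition stg : topgrp ST := @TopGrp ST sgrp smul_cont sinv_cont shaus.

Lemma snbhs (x : ST) (U : set ST) : nbhs x U ->
  exists V, nbhs (set_val x) V /\ set_val @^-1` V `<=` U.
Proof.
rewrite nbhsE => -[O [oO Ox] OU].
case: oO => B oB eB.
exists B; split.
  exists B => //; split => //; by rewrite -eB in Ox.
by rewrite eB.
Qed.

Lemma stg_NA : non_archimedean gG -> non_archimedean stg.
Proof.
move=> NA U /snbhs [V [nV VU]].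
have [W [[W1 [Wm Wi]] [oW WV]]] := NA V nV.
exists (set_val @^-1` W); split; [split; [|split]|split].
- exact: W1.
- move=> x y Wx Wy; exact: Wm.
- move=> x Wx; exact: Wi.
- by exists W.
- by move=> x /WV /VU.
Qed.

Lemma stg_prec : Defs.precompact gG -> non_archimedean gG -> Defs.precompact stg.
Proof.
move=> PC NA U /snbhs [V [nV VU]].
have [W [[W1 [Wm Wi]] [oW WV]]] := NA V nV.
have nW : nbhs (gone gG) W by apply: open_nbhs_nbhs.
have [F [fF HF]] := PC W nW.
pose pk a := xget sone [set s : ST | W (gmul gG (ginv gG a) (set_val s))].
exists (pk @` F); split; first exact: finite_image.
move=> s; have [a Fa Was] := HF (set_val s).
exists (pk a); first by exists a.
have Wp : W (gmul gG (ginv gG a) (set_val (pk a))) by exact: (@xgetI _ sone [set s : ST | W (gmul gG (ginv gG a) (set_val s))] s Was).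
apply: VU; apply: WV => /=.
have := Wm _ _ (Wi _ Wp) Was.
rewrite ginvM ginvK -(gmulA gG) (gmulA gG a) gmulVr (gmul1 gG) //.
Qed.
End SubTG.

Section PermTG.
Variable n : nat.
Local Notation T := {perm 'I_n.+1}.
Local Notation P := (discrete_topology T).

Definition pgrp : grp P :=
  @Grp P (fun x y : T => (x * y)%g) (fun x : T => (x^-1)%g) (1%g : T) (@mulgA _) (@mul1g _) (@mulVg _).
Definition ptg : topgrp P :=
  @TopGrp P pgrp (@Pmul_cont T) (@Pinv_cont T) discrete_hausdorff.

Lemma ptg_prec : Defs.precompact ptg.
Proof.
move=> U nU; exists setT; split.
  exact: (@finite_finset T).
move=> g; exists g => //; rewrite /= mulVg; exact: nbhs_singleton nU.
Qed.

Lemma ptg_NA : non_archimedean ptg.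
Proof.
move=> U nU; exists [set (1%g : T)]; split; [split; [|split]|split].
- by [].
- by move=> x y /= -> ->; rewrite mulg1.
- by move=> x /= ->; rewrite invg1.
- exact: discrete_open.
- by move=> x /= ->; exact: nbhs_singleton nU.
Qed.

Lemma evw_perm (X : finType) (g : X -> P) w : evw ptg g w = evwP g w.
Proof. by elim: w => [|l w IH] //=; rewrite IH. Qed.
End PermTG.

Section Red.
Variable X : finType.
Lemma not_red (w : seq (X * bool)) : ~~ reduced w ->
  exists u l1 l2 v, w = u ++ l1 :: l2 :: v /\ canc l1 l2.
Proof.
elim: w => [|a s IH] //; case: s IH => [|b s] IH //.
rewrite /reduced /= negb_and negbK => /orP [c|nr].
  by exists [::], a, b, s.
have [u [l1 [l2 [v [E c]]]]] := IH nr.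
by exists (a :: u), l1, l2, v; rewrite E.
Qed.

Lemma evw_canc (G : Type) (g : grp G) (f : X -> G) u l1 l2 v : canc l1 l2 ->
  evw g f (u ++ l1 :: l2 :: v) = evw g f (u ++ v).
Proof.
case: l1 l2 => [x b] [y c] /andP [/= /eqP <- bc].
rewrite !evw_cat /=; congr (gmul g _ _); rewrite /ltr /= (gmulA g).
case: b c bc => [] [] //= _; by rewrite ?gmulVr ?gmulV gmul1.
Qed.
End Red.

Theorem lemma3p11 (X : finType) (G : topologicalType) (gG : topgrp G)
  (i : X -> G) :
  is_free_prec_NA gG i -> algebraically_free gG i.
Proof.
move=> [PC [NA [UC UP]]].
have UCany : forall (H : topologicalType) (gH : topgrp H) (f : X -> H),
    unif_cont_discrete gH f.
  move=> H gH f U nU; exists (fun p => p.1 = p.2); split => // x y /= ->.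
  rewrite gmulV; exact: nbhs_singleton nU.
have A' : forall w, reduced w -> w != [::] -> evw gG i w <> gone gG.
  move=> w wr wn E.
  have [g0 Hg] := RF wr wn.
  pose g : X -> discrete_topology {perm 'I_(size w).+1} := g0.
  have [phi [[cphi hphi phii] _]] :=
    UP _ (ptg (size w)) (@ptg_prec (size w)) (@ptg_NA (size w)) g (UCany _ _ g).
  move: Hg.
  change (evw (ptg (size w)) g w != gone (ptg (size w)) -> False).
  rewrite -(@evw_ext _ _ _ (phi \o i) g w phii) -(hom_evw _ _ hphi) E.
  by rewrite (hom1 hphi) eqxx.
have A : forall w, evw gG i w = gone gG ->
    forall (K : Type) (gK : grp K) (f : X -> K), evw gK f w = gone gK.
  move=> w; have [m] := ubnP (size w); elim: m w => // m IH w Hs E K gK f.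
  case R: (reduced w).
    case: (eqVneq w [::]) => [-> //|wn].
    by exfalso; apply: (A' w R wn E).
  have [u [l1 [l2 [v [Ew c]]]]] := not_red (negbT R).
  move: E; rewrite Ew !evw_canc // => E; apply: IH => //.
  move: Hs; rewrite Ew !size_cat /=; lia.
have eqK : forall u v, evw gG i u = evw gG i v ->
    forall (K : Type) (gK : grp K) (f : X -> K), evw gK f u = evw gK f v.
  move=> u v E K gK f.
  have E1 : evw gG i (u ++ winv v) = gone gG by rewrite evw_cat evw_winv E gmulVr.
  have H := A _ E1 K gK f; rewrite evw_cat evw_winv in H.
  rewrite (ginv_uniq H).
  by rewrite ginvK.
pose S := [set a | exists w, evw gG i w = a].
have HS : subgroup gG S.
  split; first by exists [::].
  split.
    by move=> a b [u <-] [v <-]; exists (u ++ v); rewrite evw_cat.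
  by move=> a [u <-]; exists (winv u); rewrite evw_winv.
have Si : forall x, S (i x) by move=> x; exists [:: (x, true)]; rewrite /= gmul1r.
have surj : forall a, S a.
  pose f' x : set_type S := SigSub (mem_set (Si x)).
  have [psi [[cpsi hpsi psii] _]] :=
    UP _ (@stg _ _ _ HS) (@stg_prec _ _ _ HS PC NA) (@stg_NA _ _ _ HS NA) f' (UCany _ _ f').
  have [phi0 [_ uniq]] := UP _ gG PC NA i UC.
  have e1 : phi0 = (set_val \o psi).
    apply: uniq; split.
    - move=> a; apply: continuous_comp; [exact: cpsi | exact: val_cont].
    - by move=> a b /=; rewrite hpsi.
    - by move=> x /=; rewrite psii.
  have e2 : phi0 = id.
    apply: uniq; split => //.
    by move=> a; apply: cvg_id.
  move=> a; have <- : (set_val \o psi) a = a by rewrite -e1 e2.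
  exact: set_valP.
split.
  move=> x y E; case: (eqVneq x y) => // nxy; exfalso.
  apply: (A' [:: (x, true); (y, false)]) => //.
    by rewrite /reduced /= /canc /= (negbTE nxy).
  by rewrite /= /ltr /= gmul1r E gmulVr.
move=> K gK f.
pose wd a := xget [::] [set w | evw gG i w = a].
have wdP : forall a, evw gG i (wd a) = a.
  move=> a; have [w Ew] := surj a.
  exact: (@xgetI _ [::] [set w | evw gG i w = a] w Ew).
exists (fun a => evw gK f (wd a)); split; first split.
- move=> a b; rewrite -evw_cat; apply: eqK.
  by rewrite evw_cat !wdP.
- move=> x; have -> : f x = evw gK f [:: (x, true)] by rewrite /= gmul1r.
  by apply: eqK; rewrite wdP /= gmul1r.
- move=> phi' [hp phii]; apply: funext => a.
  rewrite -{2}(wdP a) (hom_evw _ _ hp); apply: evw_ext => x /=.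
  by rewrite phii.
Qed.
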